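(* Let $\mathscr{C}$ be an apex-minor-free class of graphs. There exists a constant $\nu_{\mathscr{C}}>0$ depending only on $\mathscr{C}$ such that for every $G\in\mathscr{C}$ and every nonempty $X\subseteq V(G)$, $$\left|\{N(C)\colon C\in \mathrm{cc}(G\setminus X)\}\right|\le \nu_{\mathscr{C}}\cdot |X|.$$
   Context: A class $\mathscr{C}$ is apex-minor-free if it is minor-closed and excludes some fixed apex graph (a graph that becomes planar after deleting one vertex) as a minor. $\mathrm{cc}(G\setminus X)$ denotes the set of (vertex sets of) connected components of the graph $G\setminus X$ obtained by deleting $X$, and for a vertex set $C$, $N(C)$ denotes the set of vertices outside $C$ adjacent to some vertex of $C$. *)

(* Defs.v *)
From HB Require Import structures.
From mathcomp Require Import all_boot all_order all_algebra.
From mathcomp Require Import all_classical all_reals all_analysis.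
From mathcomp Require Import Rstruct Rstruct_topology.

Set Implicit Arguments.
Unset Strict Implicit.
Unset Printing Implicit Defensive.

Import Order.TTheory GRing.Theory Num.Theory.
Local Open Scope ring_scope.

Record sgraph := SGraph {
  vt : finType;
  adj : rel vt;
  adj_sym : symmetric adj;
  adj_irrefl : irreflexive adj
}.

Section GraphDefs.
Variable G : sgraph.
Notation V := (vt G).

Definition adj_in (S : {set V}) : rel V :=
  fun u v => [&& u \in S, v \in S & adj u v].

Definition connected_set (S : {set V}) : bool :=
  [forall u in S, forall v in S, connect (adj_in S) u v].

(* C is (the vertex set of) a connected component of G \ X *)
Definition is_comp (X C : {set V}) : bool :=
  [&& C != finset.set0, C \subset ~: X, connected_set C &
      [forall u in C, forall v, (v \notin X) ==> adj u v ==> (v \in C)]].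

Definition cc (X : {set V}) : {set {set V}} := [set C | is_comp X C].

Definition nbhd (C : {set V}) : {set V} :=
  [set v | (v \notin C) && [exists u in C, adj u v]].

Definition nbhds_of_comps (X : {set V}) : {set {set V}} :=
  [set nbhd C | C in cc X].

(* Planarity of the induced subgraph G[S], defined topologically: an
   injective placement of the vertices of S in R^2 together with, for every
   edge uv of G[S], a simple arc (continuous injective image of [0,1]) from
   pos u to pos v whose interior avoids all vertex points, and such that the
   interiors of arcs of distinct edges are disjoint.  (An arc is given for
   each ordered pair; arcs for (u,v) and (v,u) are not constrained against
   each other, which is harmless: one of them may be discarded.) *)
Definition unit_int : set Rdefinitions.R := (fun t => 0 <= t <= 1).
Definition open_unit_int : set Rdefinitions.R := (fun t => 0 < t < 1).

Definition planar_on (S : {set V}) : Prop :=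
  exists (pos : V -> Rdefinitions.R * Rdefinitions.R)
         (arc : V -> V -> Rdefinitions.R -> Rdefinitions.R * Rdefinitions.R),
    {in S &, injective pos} /\
    (forall u v, adj_in S u v ->
       [/\ continuous (from_subspace unit_int (arc u v)),
           set_inj unit_int (arc u v),
           arc u v 0 = pos u, arc u v 1 = pos v &
           forall t w, open_unit_int t -> w \in S -> arc u v t <> pos w]) /\
    (forall u v u' v', adj_in S u v -> adj_in S u' v' ->
       ~ ((u = u' /\ v = v') \/ (u = v' /\ v = u')) ->
       forall t t', open_unit_int t -> open_unit_int t' ->
         arc u v t <> arc u' v' t').

Definition planar : Prop := planar_on [set: V]%SET.

Definition apex : Prop := exists a : V, planar_on [set~ a].

End GraphDefs.

Definition minor (H G : sgraph) : Prop :=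
  exists phi : vt H -> {set vt G},
    [/\ forall x, phi x != finset.set0,
        forall x, connected_set (phi x),
        forall x y, x != y -> [disjoint phi x & phi y] &
        forall x y, adj x y ->
          exists u v, [/\ u \in phi x, v \in phi y & adj u v]].

Definition minor_closed (C : sgraph -> Prop) : Prop :=
  forall G H, C G -> minor H G -> C H.

Definition apex_minor_free (C : sgraph -> Prop) : Prop :=
  minor_closed C /\
  exists H : sgraph, apex H /\ forall G, C G -> ~ minor H G.

(* Main.v *)
Require Import Defs.
From mathcomp Require Import all_boot.
From mathcomp Require Import zify.

Set Implicit Arguments.
Unset Strict Implicit.
Unset Printing Implicit Defensive.


Definition touch (G : sgraph) (A B : {set vt G}) : bool :=
  [exists u in A, [exists w in B, adj u w]].

Lemma touchC (G : sgraph) (A B : {set vt G}) : touch A B = touch B A.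
Proof.
apply/idP/idP => /existsP [u /andP [uA /existsP [w /andP [wB uw]]]];
  apply/existsP; exists w; rewrite wB /=; apply/existsP; exists u;
  by rewrite uA /= (@adj_sym G).
Qed.

Lemma touchS (G : sgraph) (A A' B B' : {set vt G}) :
  A \subset A' -> B \subset B' -> touch A B -> touch A' B'.
Proof.
move=> sA sB /existsP [u /andP [uA /existsP [w /andP [wB uw]]]].
apply/existsP; exists u; rewrite (subsetP sA _ uA) /=.
by apply/existsP; exists w; rewrite (subsetP sB _ wB).
Qed.

Lemma adj_in_sym (G : sgraph) (S : {set vt G}) : symmetric (adj_in S).
Proof. by move=> x y; rewrite /adj_in (@adj_sym G) andbCA. Qed.

Lemma connect_mono (G : sgraph) (S T : {set vt G}) x y :
  S \subset T -> connect (adj_in S) x y -> connect (adj_in T) x y.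
Proof.
move=> sST; apply: connect_sub => u v /and3P [uS vS uv].
by apply: connect1; rewrite /adj_in (subsetP sST _ uS) (subsetP sST _ vS).
Qed.

Lemma star_connected (G : sgraph) (T : {set vt G}) r :
  (forall u, u \in T -> connect (adj_in T) r u) -> connected_set T.
Proof.
move=> H; apply/forallP => u; apply/implyP => uT; apply/forallP => v.
apply/implyP => vT; apply: connect_trans (H _ vT).
by rewrite (sym_connect_sym (@adj_in_sym G T)) H.
Qed.

Lemma connected_touch_union (G : sgraph) (A B : {set vt G}) :
  connected_set A -> connected_set B -> touch A B -> connected_set (A :|: B).
Proof.
move=> cA cB /existsP [a /andP [aA /existsP [b /andP [bB ab]]]].
apply: (@star_connected _ _ a) => u; rewrite inE => /orP [uA|uB].
  apply: (@connect_mono _ A); first exact: subsetUl.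
  by move/forallP: cA => /(_ a); rewrite aA /= => /forallP /(_ u); rewrite uA.
apply: (connect_trans (y:=b)).
  by apply: connect1; rewrite /adj_in !inE aA bB ab orbT.
apply: (@connect_mono _ B); first exact: subsetUr.
by move/forallP: cB => /(_ b); rewrite bB /= => /forallP /(_ u); rewrite uB.
Qed.

Lemma comp_sub (G : sgraph) (X C C' : {set vt G}) u :
  C \in cc X -> C' \in cc X -> u \in C -> u \in C' -> C \subset C'.
Proof.
rewrite !inE => /and4P [_ sCX cC clC] /and4P [_ sC'X _ clC'] uC uC'.
apply/subsetP => w wC.
have cuw : connect (adj_in C) u w.
  by move/forallP: cC => /(_ u); rewrite uC /= => /forallP /(_ w); rewrite wC.
have cl : closed (adj_in C) (mem C').
  move=> x y /and3P [xC yC xy].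
  have xX : x \notin X by move/subsetP: sCX => /(_ x xC); rewrite inE.
  have yX : y \notin X by move/subsetP: sCX => /(_ y yC); rewrite inE.
  apply/idP/idP => [xC'|yC'].
    by move/forallP: clC' => /(_ x); rewrite xC' /= => /forallP /(_ y);
       rewrite yX xy.
  by move/forallP: clC' => /(_ y); rewrite yC' /= => /forallP /(_ x);
     rewrite xX (@adj_sym G) xy.
by rewrite -(closed_connect cl cuw).
Qed.

Lemma comp_disj (G : sgraph) (X C C' : {set vt G}) :
  C \in cc X -> C' \in cc X -> C != C' -> [disjoint C & C'].
Proof.
move=> cC cC' neq; apply/pred0P => u /=; apply/negbTE/negP => /andP [uC uC'].
move/negP: neq; apply; apply/eqP/eqP; rewrite eqEsubset.
by rewrite (comp_sub cC cC' uC uC') (comp_sub cC' cC uC' uC).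
Qed.

Lemma nbhd_sub (G : sgraph) (X C : {set vt G}) :
  C \in cc X -> nbhd C \subset X.
Proof.
rewrite inE => /and4P [_ _ _ clC]; apply/subsetP => v.
rewrite inE => /andP [vC /existsP [u /andP [uC uv]]].
apply/negPn/negP => vX; move/negP: vC; apply.
by move/forallP: clC => /(_ u); rewrite uC /= => /forallP /(_ v); rewrite vX uv.
Qed.


Definition tb (G : sgraph) (b b' : {set vt G}) : bool := (b != b') && touch b b'.
Definition deg (G : sgraph) (B : {set {set vt G}}) b := \sum_(b' in B) (tb b b' : nat).
Definition esum (G : sgraph) (B : {set {set vt G}}) := \sum_(b in B) deg B b.
Definition model (G : sgraph) (B : {set {set vt G}}) : Prop :=
  (forall b, b \in B -> b != set0 /\ connected_set b) /\
  (forall b1 b2, b1 \in B -> b2 \in B -> b1 != b2 -> [disjoint b1 & b2]).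
Definition kclique (G : sgraph) (B : {set {set vt G}}) h (Q : nat -> {set vt G}) : Prop :=
  (forall i, i < h -> [/\ connected_set (Q i), Q i \subset cover B &
                        exists2 b, b \in B & b \subset Q i]) /\
  (forall i j, i < h -> j < h -> i != j -> [disjoint Q i & Q j] /\ touch (Q i) (Q j)).

Lemma tbC (G : sgraph) (b b' : {set vt G}) : tb b b' = tb b' b.
Proof. by rewrite /tb touchC eq_sym. Qed.

Lemma tbb (G : sgraph) (b : {set vt G}) : tb b b = false.
Proof. by rewrite /tb eqxx. Qed.

Lemma esumU1 (G : sgraph) (B : {set {set vt G}}) x :
  x \notin B -> esum (x |: B) = esum B + 2 * \sum_(b in B) (tb x b : nat).
Proof.
move=> xB; rewrite /esum big_setU1 //=.
have -> : deg (x |: B) x = \sum_(b in B) (tb x b : nat).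
  by rewrite /deg big_setU1 //= tbb.
rewrite (eq_bigr (fun b => (tb x b : nat) + deg B b)).
  by rewrite big_split /=; lia.
by move=> b _; rewrite /deg big_setU1 //= tbC.
Qed.

Lemma esumD1 (G : sgraph) (B : {set {set vt G}}) v :
  v \in B -> esum B = esum (B :\ v) + 2 * deg B v.
Proof.
move=> vB; rewrite -{1}(setD1K vB) esumU1 ?setD11 //.
congr (_ + 2 * _); rewrite /deg -[in RHS](setD1K vB) big_setU1 ?setD11 //=.
by rewrite tbb.
Qed.

Lemma sum_pos_ex (T : finType) (A : {pred T}) (F : T -> nat) :
  0 < \sum_(x in A) F x -> exists2 x, x \in A & 0 < F x.
Proof.
move=> H; case: (boolP [exists x in A, 0 < F x]).
  by move=> /existsP [x /andP [xA Fx]]; exists x.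
move=> /negP nH; move: H; rewrite big1 // => x xA.
apply/eqP; rewrite -leqn0 leqNgt; apply/negP => Fx; apply: nH.
by apply/existsP; exists x; rewrite xA.
Qed.

Lemma cover_sub (T : finType) (A B : {set {set T}}) :
  (forall a, a \in A -> a \subset cover B) -> cover A \subset cover B.
Proof.
move=> H; apply/subsetP => x /bigcupP [a aA xa]; exact: subsetP (H a aA) x xa.
Qed.

Lemma sub_cover (T : finType) (A : {set {set T}}) a : a \in A -> a \subset cover A.
Proof. by move=> aA; apply/subsetP => x xa; apply/bigcupP; exists a. Qed.

Lemma disjointUl (T : finType) (A B C : {set T}) :
  [disjoint A :|: B & C] = [disjoint A & C] && [disjoint B & C].
Proof. by rewrite -!setI_eq0 setIUl setU_eq0. Qed.

Lemma arith1 a b c d e : a + b <= c + d -> e + 2 * b + 2 * (1 + a) <= e + 2 * c + 2 + 2 * d.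
Proof. lia. Qed.

Definition mc (G : sgraph) (B : {set {set vt G}}) v w :=
  \sum_(x in B) (tb v x : nat) * (tb w x : nat).

Lemma contract_model (G : sgraph) (B : {set {set vt G}}) v w :
  model B -> v \in B -> w \in B -> tb v w ->
  [/\ model ((v :|: w) |: (B :\: [set v; w])),
      #|(v :|: w) |: (B :\: [set v; w])|.+1 = #|B|,
      cover ((v :|: w) |: (B :\: [set v; w])) \subset cover B,
      (forall b, b \in (v :|: w) |: (B :\: [set v; w]) -> exists2 b0, b0 \in B & b0 \subset b) &
      esum B <= esum ((v :|: w) |: (B :\: [set v; w])) + 2 + 2 * mc B v w].
Proof.
move=> [mB dB] vB wB /andP [nvw tvw].
set u := v :|: w; set R := B :\: [set v; w].
have [nv cv] := mB v vB; have [nw cw] := mB w wB.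
have uB : u \notin B.
  apply/negP => uB; case: (eqVneq u v) => [uv|nuv].
    have /set0Pn [b bw] := nw.
    have bv : b \in v by rewrite -uv /u inE bw orbT.
    have := dB v w vB wB nvw; rewrite disjoints_subset => /subsetP /(_ b bv).
    by rewrite inE bw.
  have /set0Pn [a av] := nv.
  have := dB u v uB vB nuv; rewrite disjoints_subset => /subsetP /(_ a).
  by rewrite /u inE av /= => /(_ isT); rewrite inE av.
have RB : R \subset B by apply: subsetDl.
have uR : u \notin R by apply/negP => /(subsetP RB); apply/negP.
have wR : w \notin R by rewrite inE !inE eqxx orbT.
have vwR : v \notin w |: R by rewrite !inE (negbTE nvw) /= eqxx.
have eB : B = v |: (w |: R).
  apply/setP => x; rewrite !inE; case: (eqVneq x v) => [->|]; first by rewrite vB.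
  by case: (eqVneq x w) => [->|] //=; rewrite wB.
have tux : forall x, x \in R -> (tb v x : nat) + tb w x <= tb u x + tb v x * tb w x.
  move=> x xR; have xB := subsetP RB x xR.
  have nux : u != x by apply/negP => /eqP ux; move: uB; rewrite ux xB.
  rewrite /tb nux /=.
  move: (@touchS G v u x x (subsetUl v w) (subxx x)) (@touchS G w u x x (subsetUr v w) (subxx x)).
  case: (touch v x); case: (touch w x); case: (touch u x); case: (v != x); case: (w != x) => //;
    by [move=> /(_ isT) | move=> _ /(_ isT)].
split.
- split.
  + move=> b; move=> /setU1P [->|/(subsetP RB) bB]; last exact: mB.
    split; first by apply/set0Pn; have /set0Pn [a av] := nv; exists a; rewrite inE av.
    exact: connected_touch_union.
  + move=> b1 b2; move=> /setU1P [->|b1R] /setU1P [->|b2R];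
      rewrite ?eqxx //.
    * move=> _; have b2B := subsetP RB b2 b2R.
      move: b2R; rewrite !inE negb_or => /andP [/andP [n2v n2w] _].
      rewrite disjointUl (dB v b2 vB b2B) 1?eq_sym //.
      by rewrite (dB w b2 wB b2B) 1?eq_sym.
    * move=> _; have b1B := subsetP RB b1 b1R.
      move: b1R; rewrite !inE negb_or => /andP [/andP [n1v n1w] _].
      by rewrite disjoint_sym disjointUl (dB v b1 vB b1B) 1?eq_sym // (dB w b1 wB b1B) 1?eq_sym.
    * by apply: dB; apply: (subsetP RB).
- by rewrite cardsU1 uR eB cardsU1 vwR cardsU1 wR.
- apply: cover_sub => a; move=> /setU1P [->|/(subsetP RB) aB];
    last exact: sub_cover.
  by rewrite subUset !sub_cover.
- move=> b; move=> /setU1P [->|/(subsetP RB) bB]; last by exists b.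
  by exists v => //; apply: subsetUl.
have -> : mc B v w = \sum_(x in R) (tb v x : nat) * tb w x.
  by rewrite /mc eB big_setU1 //= big_setU1 //= !tbb /= !muln0 !mul0n.
rewrite eB esumU1 // esumU1 // big_setU1 //= (_ : tb v w = true) ?esumU1 //; last by rewrite /tb nvw.
have H : \sum_(x in R) ((tb v x : nat) + tb w x) <=
    \sum_(x in R) ((tb u x : nat) + tb v x * tb w x) by apply: leq_sum.
move: H; rewrite !big_split /=.
set a := \sum_(i in R) (tb v i : nat); set b := \sum_(i in R) (tb w i : nat).
set c := \sum_(i in R) (tb u i : nat); set d := \sum_(i in R) ((tb v i : nat) * tb w i).
set e := esum R. exact: arith1.
Qed.

Lemma model_sub (G : sgraph) (B B' : {set {set vt G}}) :
  B' \subset B -> model B -> model B'.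
Proof.
move=> sB [mB dB]; split; first by move=> b /(subsetP sB); apply: mB.
by move=> b1 b2 /(subsetP sB) b1B /(subsetP sB) b2B; apply: dB.
Qed.

Lemma kclique_sub (G : sgraph) (B B' : {set {set vt G}}) h Q :
  cover B' \subset cover B ->
  (forall b, b \in B' -> exists2 b0, b0 \in B & b0 \subset b) ->
  kclique B' h Q -> kclique B h Q.
Proof.
move=> sc sb [H1 H2]; split => // i ih.
have [c1 c2 [b bB' bQ]] := H1 i ih; split => //; first exact: subset_trans sc.
have [b0 b0B sb0] := sb b bB'; exists b0 => //; exact: subset_trans bQ.
Qed.

Lemma degD1 (G : sgraph) (B : {set {set vt G}}) v :
  v \in B -> deg B v = \sum_(b in B :\ v) (tb v b : nat).
Proof. by move=> vB; rewrite /deg -{1}(setD1K vB) big_setU1 ?setD11 //= tbb. Qed.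

Theorem density h : forall (G : sgraph) (B : {set {set vt G}}),
  model B -> B != set0 -> 2 ^ h * #|B| <= esum B -> exists Q, kclique B h Q.
Proof.
elim: h => [|h IHh] G B.
  by move=> _ _ _; exists (fun _ => set0); split.
move: {2}(#|B|) (leqnn #|B|) => n; elim: n B => [|n IHn] B leB mB nB dens.
  by move: leB; rewrite leqn0 cards_eq0 (negbTE nB).
case: (boolP [exists v in B, 2 * deg B v <= 2 ^ h.+1]).
  move=> /existsP [v /andP [vB dv]].
  have e1 := esumD1 vB; have c1 := cardsD1 v B; rewrite vB /= in c1.
  have nB' : B :\ v != set0.
    apply/negP => /eqP e0; move: dens; rewrite e1 degD1 // e0 big_set0 /esum big_set0.
    by rewrite c1 e0 cards0 muln1 muln0 leqNgt expn_gt0.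
  have l1 : #|B :\ v| <= n by move: leB; rewrite c1.
  have l2 : 2 ^ h.+1 * #|B :\ v| <= esum (B :\ v).
    move: dens dv; rewrite e1 c1 mulnS; set c := 2 ^ h.+1; set x := c * _; set e := esum _; set d := deg B v. lia.
  have [Q HQ] := IHn (B :\ v) l1 (model_sub (subsetDl _ _) mB) nB' l2.
  exists Q; apply: kclique_sub HQ.
    by apply: cover_sub => a /setD1P [_ aB]; apply: sub_cover.
  by move=> b /setD1P [_ bB]; exists b.
move=> nA.
case: (boolP [exists v in B, exists w in B, tb v w && (2 + 2 * mc B v w <= 2 ^ h.+1)]).
  move=> /existsP [v /andP [vB /existsP [w /andP [wB /andP [tvw dm]]]]].
  have [mB' cB' sc sb de] := contract_model mB vB wB tvw.
  have nB' : (v :|: w) |: (B :\: [set v; w]) != set0.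
    by apply/set0Pn; exists (v :|: w); rewrite setU11.
  have l1 : #|(v :|: w) |: (B :\: [set v; w])| <= n by move: leB; rewrite -cB'.
  have l2 : 2 ^ h.+1 * #|(v :|: w) |: (B :\: [set v; w])| <= esum ((v :|: w) |: (B :\: [set v; w])).
    move: dens de dm; rewrite -cB' mulnS; set c := 2 ^ h.+1; set x := c * _.
    set e := esum B; set e2 := esum (_ |: _); set m := mc B v w. lia.
  have [Q HQ] := IHn _ l1 mB' nB' l2.
  by exists Q; apply: kclique_sub HQ.
move=> nBB.
have [v vB] := set0Pn _ nB.
have dv : 2 ^ h.+1 < 2 * deg B v.
  by rewrite ltnNge; apply/negP => dv; move/negP: nA; apply; apply/existsP; exists v; rewrite vB.
have mcw : forall w, w \in B -> tb v w -> 2 ^ h <= mc B v w.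
  move=> w wB tvw; rewrite leqNgt; apply/negP => lt; move/negP: nBB; apply.
  apply/existsP; exists v; rewrite vB /=; apply/existsP; exists w; rewrite wB tvw /=.
  by rewrite expnS; lia.
set N := [set x in B | tb v x].
have NB : N \subset B by apply/subsetP => x; rewrite inE => /andP [].
have nN : N != set0.
  have [x xB tx] : exists2 x, x \in B & 0 < (tb v x : nat).
    by apply: sum_pos_ex; rewrite -/(deg B v); lia.
  by apply/set0Pn; exists x; rewrite inE xB; case: (tb v x) tx.
have dN : 2 ^ h * #|N| <= esum N.
  rewrite mulnC -sum_nat_const /esum; apply: leq_sum => w wN.
  have : w \in B /\ tb v w by move: wN; rewrite inE => /andP.
  move=> [wB tvw]; apply: leq_trans (mcw w wB tvw) _.
  have -> : deg N w = mc B v w.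
    rewrite /deg /mc; transitivity (\sum_(x in B | tb v x) (tb w x : nat)).
      by apply: eq_bigl => x; rewrite /N inE.
    rewrite big_mkcondr; apply: eq_bigr => x _.
    by case: (tb v x); rewrite ?mul1n ?mul0n.
  by [].
have [Q [H1 H2]] := IHh G N (model_sub NB mB) nN dN.
have [mB1 dB] := mB.
have disjN : [disjoint v & cover N].
  apply/bigcup_disjointP => b; rewrite inE => /andP [bB tvb].
  by apply: dB => //; move: tvb => /andP [].
exists (fun i => if i is k.+1 then Q k else v); split.
  case=> [|k] kh.
    split; [by case: (mB1 v vB) | exact: sub_cover | by exists v].
  have [c1 c2 [b bN bQ]] := H1 k kh; split => //.
    by apply: subset_trans c2 _; apply: cover_sub => a aN; apply: sub_cover; apply: (subsetP NB).
  by exists b => //; apply: (subsetP NB).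
have aux : forall k, k < h -> [disjoint v & Q k] /\ touch v (Q k).
  move=> k kh; have [c1 c2 [b bN bQ]] := H1 k kh; split.
    exact: disjointWr c2 disjN.
  apply: (touchS (subxx v) bQ); move: bN; rewrite inE => /andP [_ /andP []] //.
case=> [|k] [|l] //= kh lh nkl.
- by apply: aux.
- by have [d t] := aux k kh; rewrite disjoint_sym touchC.
- by apply: H2.
Qed.


Definition fclique (V : finType) (F : rel V) (K : {set V}) : bool :=
  [forall x in K, forall y in K, (x != y) ==> F x y].

Lemma clique_count (V : finType) (F : rel V) (c : nat) : forall n (S : {set V}), #|S| <= n ->
  (forall S' : {set V}, S' \subset S -> S' != set0 ->
     exists2 a, a \in S' & #|[set b in S' | F a b]| < c) ->
  #|[set K : {set V} | (K \subset S) && fclique F K]| <= 2 ^ c * #|S| + 1.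
Proof.
elim=> [|n IHn] S leS Hdeg.
  move: leS; rewrite leqn0 cards_eq0 => /eqP ->; rewrite cards0 muln0 add0n.
  rewrite -(cards1 (set0 : {set V})); apply: subset_leq_card.
  by apply/subsetP => K; rewrite !inE subset0 => /andP [].
case: (eqVneq S set0) => [->|nS].
  rewrite cards0 muln0 add0n -(cards1 (set0 : {set V})); apply: subset_leq_card.
  by apply/subsetP => K; rewrite !inE subset0 => /andP [].
have [a aS da] := Hdeg S (subxx S) nS.
set Na := [set b in S | F a b].
have c1 := cardsD1 a S; rewrite aS /= in c1.
have IH := IHn (S :\ a) ltac:(move: leS; rewrite c1; lia)
  (fun S' sS' => Hdeg S' (subset_trans sS' (subsetDl S [set a]))).
have sub : [set K : {set V} | (K \subset S) && fclique F K] \subset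
    [set K : {set V} | (K \subset S :\ a) && fclique F K] :|: [set a |: K | K in powerset Na].
  apply/subsetP => K; rewrite inE => /andP [KS cK]; rewrite inE.
  case: (boolP (a \in K)) => aK; last first.
    apply/orP; left; rewrite inE cK andbT; apply/subsetP => x xK.
    rewrite !inE (subsetP KS _ xK) andbT; apply/negP => /eqP xa; move: aK.
    by rewrite -xa xK.
  apply/orP; right; apply/imsetP; exists (K :\ a); last by rewrite setD1K.
  rewrite inE; apply/subsetP => y; rewrite !inE => /andP [ya yK].
  rewrite (subsetP KS _ yK) /=.
  by move/forallP: cK => /(_ a); rewrite aK /= => /forallP /(_ y); rewrite yK eq_sym ya.
apply: leq_trans (subset_leq_card sub) _.
apply: leq_trans (leq_card_setU _ _).1 _.
have l2 : #|[set a |: K | K in powerset Na]| <= 2 ^ c.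
  apply: leq_trans (leq_imset_card _ _) _; rewrite card_powerset leq_exp2l //.
  exact: ltnW.
move: IH l2; rewrite c1; set x := #|_|; set y := #|_|; set p := 2 ^ c; set q := #|S :\ a|.
rewrite mulnS; lia.
Qed.


Lemma card_sum (T : finType) (A : {set T}) (P : pred T) :
  #|[set x in A | P x]| = \sum_(x in A) (P x : nat).
Proof.
rewrite -sum1_card (eq_bigl (fun x => (x \in A) && P x)); last by move=> x; rewrite inE.
by rewrite big_mkcondr /=; apply: eq_bigr => x _; case: (P x).
Qed.

Lemma disjP (T : finType) (A B : {set T}) :
  reflect (forall x, x \in A -> x \in B -> False) [disjoint A & B].
Proof.
rewrite -setI_eq0; apply: (iffP eqP) => [H x xA xB | H].
  have: x \in A :&: B by rewrite inE xA xB.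
  by rewrite H inE.
apply/setP => x; rewrite !inE; apply/negP => /andP [xA xB]; exact: H x xA xB.
Qed.

Definition pmap_t (G : sgraph) := {ffun {set vt G} -> option (vt G * vt G)}.

Definition valid (G : sgraph) (Y : {set {set vt G}}) (p : pmap_t G) : Prop :=
  (forall D a b, p D = Some (a, b) -> [/\ D \in Y, a != b, a \in nbhd D & b \in nbhd D]) /\
  (forall D D' a b, p D = Some (a, b) -> (p D' = Some (a, b) \/ p D' = Some (b, a)) -> D = D').

Definition Fp (G : sgraph) (p : pmap_t G) : rel (vt G) :=
  fun a b => [exists D, (p D == Some (a, b)) || (p D == Some (b, a))].

Definition asg (G : sgraph) (p : pmap_t G) : {set {set vt G}} := [set D | p D != None].

Definition maxb (G : sgraph) (Y : {set {set vt G}}) (p : pmap_t G) : bool :=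
  [forall D in Y, (p D == None) ==>
     [forall a in nbhd D, [forall b in nbhd D, (a != b) ==> Fp p a b]]].

Lemma asg_sub (G : sgraph) (Y : {set {set vt G}}) (p : pmap_t G) :
  valid Y p -> asg p \subset Y.
Proof.
move=> [v1 _]; apply/subsetP => D; rewrite inE.
by case e: (p D) => [[a b]|] // _; have [] := v1 _ _ _ e.
Qed.

Lemma extend (G : sgraph) (Y : {set {set vt G}}) (p : pmap_t G) :
  valid Y p -> ~~ maxb Y p -> exists p', valid Y p' /\ #|asg p'| = #|asg p|.+1.
Proof.
move=> [v1 v2] /forall_inPn [D DY]; rewrite negb_imply => /andP [/eqP pD].
move=> /forall_inPn [a aN] /forall_inPn [b bN]; rewrite negb_imply => /andP [ab nF].
pose p' : pmap_t G := [ffun E => if E == D then Some (a, b) else p E].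
have nF' : forall E, p E = Some (a, b) \/ p E = Some (b, a) -> False.
  move=> E HE; move/negP: nF; apply; apply/existsP; exists E.
  by case: HE => ->; rewrite eqxx ?orbT.
exists p'; split; first split.
- move=> E x y; rewrite ffunE; case: (eqVneq E D) => [-> [<- <-]|_ /v1] //.
- move=> E E' x y; rewrite !ffunE.
  case: (eqVneq E D) => [-> [<- <-]|nED]; case: (eqVneq E' D) => [->|nE'D] //.
  + by move=> HE'; case: (nF' E'); case: HE' => ->; [left|right].
  + move=> pE [] [ea eb]; subst; case: (nF' E); [left|right] => //.
  + exact: v2.
- have -> : asg p' = D |: asg p.
    apply/setP => E; rewrite !inE ffunE; case: (eqVneq E D) => //=.
  by rewrite cardsU1 inE pD eqxx.
Qed.

Lemma exists_max (G : sgraph) (Y : {set {set vt G}}) :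
  exists p : pmap_t G, valid Y p /\ maxb Y p.
Proof.
suff: forall k (p : pmap_t G), valid Y p -> #|Y| - #|asg p| <= k ->
    exists q : pmap_t G, valid Y q /\ maxb Y q.
  move=> /(_ #|Y| [ffun => None]); apply => //; last by lia.
  by split => [D a b|D D' a b]; rewrite ffunE.
elim=> [|k IHk] p vp hk; (case: (boolP (maxb Y p)) => [mp|nmp]; first by exists p);
  have [p' [vp' cp']] := extend vp nmp; have := subset_leq_card (asg_sub vp').
  by lia.
by move=> l; apply: (IHk p' vp'); lia.
Qed.

Definition bag (G : sgraph) (p : pmap_t G) (S : {set vt G}) (a : vt G) : {set vt G} :=
  a |: \bigcup_(D | [exists b in S, p D == Some (a, b)]) D.

Definition BS (G : sgraph) (p : pmap_t G) (S : {set vt G}) : {set {set vt G}} :=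
  [set bag p S a | a in S].

Lemma bag_mem (G : sgraph) (p : pmap_t G) (S : {set vt G}) a x :
  x \in bag p S a -> x = a \/ exists D b, [/\ b \in S, p D = Some (a, b) & x \in D].
Proof.
move=> /setU1P [->|/bigcupP [D /existsP [b /andP [bS /eqP pD]] xD]]; first by left.
by right; exists D, b.
Qed.

Lemma sub_bag (G : sgraph) (p : pmap_t G) (S : {set vt G}) a b D :
  b \in S -> p D = Some (a, b) -> D \subset bag p S a.
Proof.
move=> bS pD; apply/subsetP => x xD; apply/setU1P; right; apply/bigcupP; exists D => //.
by apply/existsP; exists b; rewrite bS pD eqxx.
Qed.

Lemma bag_self (G : sgraph) (p : pmap_t G) (S : {set vt G}) a : a \in bag p S a.
Proof. exact: setU11. Qed.

Lemma asg_info (G : sgraph) (X : {set vt G}) (Y : {set {set vt G}}) (p : pmap_t G) D a b :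
  valid Y p -> Y \subset cc X -> p D = Some (a, b) ->
  [/\ D \in cc X, a \in X, b \in X, a != b & [/\ a \in nbhd D, b \in nbhd D & D \subset ~: X]].
Proof.
move=> [v1 _] YX pD; have [DY ab aN bN] := v1 _ _ _ pD.
have DX := subsetP YX _ DY.
split => //; try exact: (subsetP (nbhd_sub DX)).
split => //; by move: DX; rewrite inE => /and4P [].
Qed.

Lemma bag_disj (G : sgraph) (X : {set vt G}) (Y : {set {set vt G}}) (p : pmap_t G) (S : {set vt G}) a a' :
  valid Y p -> Y \subset cc X -> S \subset X -> a \in S -> a' \in S -> a != a' ->
  [disjoint bag p S a & bag p S a'].
Proof.
move=> vp YX SX aS a'S aa'; apply/disjP => x /bag_mem [-> | [D [b [bS pD xD]]]]
  /bag_mem [xa' | [D' [b' [b'S pD' xD']]]].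
- by move: aa'; rewrite xa' eqxx.
- have [_ _ _ _ [_ _ sD]] := asg_info vp YX pD'.
  by move: (subsetP sD _ xD'); rewrite inE (subsetP SX _ aS).
- have [_ _ _ _ [_ _ sD]] := asg_info vp YX pD.
  by move: (subsetP sD _ xD); rewrite inE xa' (subsetP SX _ a'S).
- have [DX _ _ _ _] := asg_info vp YX pD; have [D'X _ _ _ _] := asg_info vp YX pD'.
  case: (eqVneq D D') => [eD|nD].
    by move: pD'; rewrite -eD pD => -[ea _]; move: aa'; rewrite ea eqxx.
  by move/disjP: (comp_disj DX D'X nD) => /(_ x xD xD').
Qed.

Lemma bag_conn (G : sgraph) (X : {set vt G}) (Y : {set {set vt G}}) (p : pmap_t G) (S : {set vt G}) a :
  valid Y p -> Y \subset cc X -> connected_set (bag p S a).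
Proof.
move=> vp YX; apply: (@star_connected _ _ a) => u /bag_mem [-> | [D [b [bS pD uD]]]].
  exact: connect0.
have [DX _ _ _ [aN _ _]] := asg_info vp YX pD.
have sD := sub_bag bS pD.
move: aN; rewrite inE => /andP [_ /existsP [z /andP [zD za]]].
apply: (connect_trans (y:=z)).
  by apply: connect1; rewrite /adj_in bag_self (subsetP sD _ zD) (@adj_sym G) za.
apply: (connect_mono sD).
move: DX; rewrite inE => /and4P [_ _ cD _].
by move/forallP: cD => /(_ z); rewrite zD /= => /forallP /(_ u); rewrite uD.
Qed.

Lemma bag_inj (G : sgraph) (X : {set vt G}) (Y : {set {set vt G}}) (p : pmap_t G) (S : {set vt G}) :
  valid Y p -> Y \subset cc X -> S \subset X -> {in S &, injective (bag p S)}.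
Proof.
move=> vp YX SX a a' aS a'S e; apply/eqP; apply/negP => /negP na.
have := bag_disj vp YX SX aS a'S na; rewrite e => /disjP /(_ a').
by rewrite bag_self => /(_ isT isT).
Qed.

Lemma BS_model (G : sgraph) (X : {set vt G}) (Y : {set {set vt G}}) (p : pmap_t G) (S : {set vt G}) :
  valid Y p -> Y \subset cc X -> S \subset X -> model (BS p S).
Proof.
move=> vp YX SX; split.
  move=> b /imsetP [a aS ->]; split; last exact: bag_conn vp YX.
  by apply/set0Pn; exists a; apply: bag_self.
move=> b1 b2 /imsetP [a1 a1S ->] /imsetP [a2 a2S ->] nb.
apply: bag_disj vp YX SX a1S a2S _; apply/negP => /eqP e; move: nb; by rewrite e eqxx.
Qed.

Lemma Fp_tb (G : sgraph) (X : {set vt G}) (Y : {set {set vt G}}) (p : pmap_t G) (S : {set vt G}) a b :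
  valid Y p -> Y \subset cc X -> S \subset X -> a \in S -> b \in S -> Fp p a b ->
  tb (bag p S a) (bag p S b).
Proof.
move=> vp YX SX aS bS /existsP [D /orP [] /eqP pD].
  have [_ _ _ ab [_ bN _]] := asg_info vp YX pD.
  rewrite /tb; apply/andP; split.
    by apply/negP => /eqP /(bag_inj vp YX SX aS bS) eab; move: ab; rewrite eab eqxx.
  move: bN; rewrite inE => /andP [_ /existsP [z /andP [zD zb]]].
  apply/existsP; exists z; rewrite (subsetP (sub_bag bS pD) _ zD) /=.
  by apply/existsP; exists b; rewrite bag_self.
have [_ _ _ ab [_ aN _]] := asg_info vp YX pD.
rewrite /tb; apply/andP; split.
  by apply/negP => /eqP /(bag_inj vp YX SX aS bS) eab; move: ab; rewrite eab eqxx.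
rewrite touchC; move: aN; rewrite inE => /andP [_ /existsP [z /andP [zD za]]].
apply/existsP; exists z; rewrite (subsetP (sub_bag aS pD) _ zD) /=.
by apply/existsP; exists a; rewrite bag_self.
Qed.

Lemma deg_bag (G : sgraph) (X : {set vt G}) (Y : {set {set vt G}}) (p : pmap_t G) (S : {set vt G}) a :
  valid Y p -> Y \subset cc X -> S \subset X -> a \in S ->
  #|[set b in S | Fp p a b]| <= deg (BS p S) (bag p S a).
Proof.
move=> vp YX SX aS; rewrite card_sum /deg /BS big_imset /=; last exact: bag_inj vp YX SX.
apply: leq_sum => b bS; case e: (Fp p a b) => //.
by rewrite (Fp_tb vp YX SX aS bS e).
Qed.

Lemma esum_BS (G : sgraph) (X : {set vt G}) (Y : {set {set vt G}}) (p : pmap_t G) (S : {set vt G}) :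
  valid Y p -> Y \subset cc X -> S \subset X ->
  esum (BS p S) = \sum_(a in S) deg (BS p S) (bag p S a).
Proof. by move=> vp YX SX; rewrite /esum {1}/BS big_imset //=; exact: bag_inj vp YX SX. Qed.

Lemma degen (G : sgraph) (X : {set vt G}) (Y : {set {set vt G}}) (p : pmap_t G) (c : nat) :
  (forall B : {set {set vt G}}, model B -> B != set0 -> esum B < c * #|B|) ->
  valid Y p -> Y \subset cc X -> forall S : {set vt G}, S \subset X -> S != set0 ->
  exists2 a, a \in S & #|[set b in S | Fp p a b]| < c.
Proof.
move=> Hd vp YX S SX nS.
have nB : BS p S != set0.
  by have [a aS] := set0Pn _ nS; apply/set0Pn; exists (bag p S a); apply: imset_f.
have := Hd _ (BS_model vp YX SX) nB.
rewrite {2}/BS card_in_imset; last exact: bag_inj vp YX SX.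
case: (boolP [exists a in S, deg (BS p S) (bag p S a) < c]).
  move=> /existsP [a /andP [aS da]] _; exists a => //.
  exact: leq_ltn_trans (deg_bag vp YX SX aS) da.
move=> /negP nE; rewrite (esum_BS vp YX SX) ltnNge => /negP []; rewrite mulnC -sum_nat_const.
apply: leq_sum => a aS; rewrite leqNgt; apply/negP => da; apply: nE.
by apply/existsP; exists a; rewrite aS.
Qed.

Lemma asg_bound (G : sgraph) (X : {set vt G}) (Y : {set {set vt G}}) (p : pmap_t G) (c : nat) :
  (forall B : {set {set vt G}}, model B -> B != set0 -> esum B < c * #|B|) ->
  valid Y p -> Y \subset cc X -> X != set0 -> #|asg p| < c * #|X|.
Proof.
move=> Hd vp YX nX; have [a0 a0X] := set0Pn _ nX.
pose fst_ (D : {set vt G}) := if p D is Some q then q.1 else a0.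
pose snd_ (D : {set vt G}) := if p D is Some q then q.2 else a0.
have step1 : #|asg p| <= \sum_(a in X) #|[set D in asg p | fst_ D == a]|.
  rewrite -sum1_card.
  have -> : \sum_(a in X) #|[set D in asg p | fst_ D == a]| =
            \sum_(a in X) \sum_(D in asg p) ((fst_ D == a) : nat).
    by apply: eq_bigr => a _; rewrite card_sum.
  rewrite exchange_big /=; apply: leq_sum => D; rewrite inE.
  case e: (p D) => [[x y]|] // _.
  have [_ xX _ _ _] := asg_info vp YX e.
  by rewrite (bigD1 x) //= /fst_ e eqxx.
have step2 : forall a, a \in X -> #|[set D in asg p | fst_ D == a]| <= #|[set b in X | Fp p a b]|.
  move=> a aX; rewrite -(card_in_imset (f := snd_)).
    apply: subset_leq_card; apply/subsetP => y /imsetP [D].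
    rewrite !inE /fst_ /snd_; case e: (p D) => [[x z]|] //= /eqP xa ->.
    have [_ _ zX _ _] := asg_info vp YX e; rewrite zX /=.
    by apply/existsP; exists D; rewrite e -xa eqxx.
  move=> D D'; rewrite !inE /fst_ /snd_.
  case e: (p D) => [[x z]|] //= /eqP xa.
  case e': (p D') => [[x' z']|] //= /eqP xa' ez.
  apply: (proj2 vp D D' x z e); left; by rewrite e' xa' xa ez.
have step3 : \sum_(a in X) #|[set b in X | Fp p a b]| <= esum (BS p X).
  rewrite (esum_BS vp YX (subxx X)); apply: leq_sum => a aX.
  exact: deg_bag vp YX (subxx X) aX.
have nB : BS p X != set0 by apply/set0Pn; exists (bag p X a0); apply: imset_f.
have := Hd _ (BS_model vp YX (subxx X)) nB.
rewrite {2}/BS card_in_imset; last exact: bag_inj vp YX (subxx X).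
move=> h; apply: leq_ltn_trans h; apply: leq_trans step1 _; apply: leq_trans step3.
exact: leq_sum.
Qed.

Lemma main_count (G : sgraph) (X : {set vt G}) (Y : {set {set vt G}}) (c : nat) :
  (forall B : {set {set vt G}}, model B -> B != set0 -> esum B < c * #|B|) ->
  X != set0 -> Y \subset cc X -> {in Y &, injective (@nbhd G)} ->
  #|Y| <= (c + 2 ^ c + 1) * #|X|.
Proof.
move=> Hd nX YX inj.
have [p [vp mp]] := exists_max Y.
have c1 := asg_bound Hd vp YX nX.
have c2 : #|Y :\: asg p| <= 2 ^ c * #|X| + 1.
  rewrite -(card_in_imset (f := @nbhd G)); last first.
    by move=> D D' /setDP [DY _] /setDP [D'Y _]; apply: inj.
  apply: leq_trans (clique_count (n := #|X|) (leqnn _) (degen Hd vp YX)).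
  apply: subset_leq_card; apply/subsetP => N /imsetP [D /setDP [DY nDA] ->].
  rewrite inE (nbhd_sub (subsetP YX _ DY)) /=.
  move/forall_inP: mp => /(_ D DY); rewrite inE negbK in nDA; rewrite nDA /=.
  by move=> H; apply: H.
have := cardsID (asg p) Y; rewrite (setIidPr (asg_sub vp)) => <-.
have : 0 < #|X| by rewrite card_gt0.
move: c1 c2; set x := #|X|; set a := #|asg p|; set b := #|Y :\: asg p|; set q := 2 ^ c.
rewrite !mulnDl; nia.
Qed.


Lemma clique_minor (H G : sgraph) (B : {set {set vt G}}) Q :
  model B -> kclique B #|vt H| Q -> minor H G.
Proof.
move=> [mB _] [H1 H2].
exists (fun x => Q (enum_rank x)); split.
- move=> x; have [_ _ [b bB sb]] := H1 _ (ltn_ord (enum_rank x)).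
  have [nb _] := mB b bB; have [z zb] := set0Pn _ nb.
  by apply/set0Pn; exists z; apply: (subsetP sb).
- by move=> x; have [] := H1 _ (ltn_ord (enum_rank x)).
- move=> x y nxy; apply: (proj1 (H2 _ _ (ltn_ord _) (ltn_ord _) _)).
  by apply/negP => /eqP /val_inj /enum_rank_inj exy; move: nxy; rewrite exy eqxx.
- move=> x y xy.
  have nxy : x != y by apply/negP => /eqP exy; move: xy; rewrite exy (@adj_irrefl H).
  have [_ t] := H2 _ _ (ltn_ord (enum_rank x)) (ltn_ord (enum_rank y))
    ltac:(by apply/negP => /eqP /val_inj /enum_rank_inj exy; move: nxy; rewrite exy eqxx).
  move: t => /existsP [u /andP [uQ /existsP [v /andP [vQ uv]]]].
  by exists u, v.
Qed.

Theorem corollary2p3 (C : sgraph -> Prop) :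
  apex_minor_free C ->
  exists nu : nat, 0 < nu /\
    forall G : sgraph, C G ->
    forall X : {set vt G}, X != set0 ->
      #|nbhds_of_comps X| <= nu * #|X|.
Proof.
move=> [_ [H [_ Hfree]]].
set c := 2 ^ #|vt H|.
exists (c + 2 ^ c + 1); split; first by rewrite addn1.
move=> G CG X nX.
have Hd : forall B : {set {set vt G}}, model B -> B != set0 -> esum B < c * #|B|.
  move=> B mB nB; rewrite ltnNge; apply/negP => dens.
  have [Q HQ] := density mB nB dens.
  exact: (Hfree G CG (clique_minor mB HQ)).
pose rep (N : {set vt G}) := odflt set0 [pick D in cc X | nbhd D == N].
have repP : forall N, N \in nbhds_of_comps X -> rep N \in cc X /\ nbhd (rep N) = N.
  move=> N /imsetP [C0 C0X ->]; rewrite /rep.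
  case: pickP => [D /andP [DX /eqP e] | none] //=.
  by move: (none C0); rewrite C0X eqxx.
set Y := [set rep N | N in nbhds_of_comps X].
have cY : #|Y| = #|nbhds_of_comps X|.
  apply: card_in_imset => N N' NN N'N e.
  by rewrite -(proj2 (repP N NN)) -(proj2 (repP N' N'N)) e.
rewrite -cY; apply: (main_count Hd nX).
  by apply/subsetP => D /imsetP [N NN ->]; exact: (proj1 (repP N NN)).
move=> D D' /imsetP [N NN ->] /imsetP [N' N'N ->].
by rewrite (proj2 (repP N NN)) (proj2 (repP N' N'N)) => ->.
Qed.
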